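(* Let $A,B:(0,\infty)\to(0,\infty)$ be the functions $A=\tfrac r3\sqrt{1-r^{-3}}$, $B=\tfrac r{\sqrt3}$, where $r=r(t)\in(1,\infty)$ is determined by $\dot A=\tfrac12(1-A^2/B^2)$, $\dot B=A/B$ with $r\to1$ as $t\to0$. Consider the ODE system $$\dot f_+=\frac{f_+}{A}\Bigl(1-\frac{A^2}{B^2}-f_+\Bigr)+f_-^2\frac{A}{B^2},\qquad \dot f_-=\frac{2f_-}{A}(f_+-1).$$ If a solution $(f_+,f_-)$ lies in $\mathcal{R}_\infty=\{f_+>1,\ f_->1\}$ at some time $t_0>0$, then it cannot be uniformly bounded for all $t\ge t_0$.
   Context: $A$ and $B$ are the metric coefficients of the Bryant–Salamon $G_2$-metric on $\mathbf{S}(S^3)$, and the system is the $\mathrm{SU}(2)^3$-invariant $G_2$-instanton equation for $\mathrm{SU}(2)$-connections $f_+\sum_iE_i\otimes e_i^++f_-\sum_iE_i\otimes e_i^-$. ''Cannot be uniformly bounded for all $t\ge t_0$'' includes the possibility of blow-up in finite time. *)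

(* Defs.v *)
From Stdlib Require Import Reals Lra.
From Coquelicot Require Import Coquelicot.
Open Scope R_scope.

Definition BS_A (r : R -> R) (t : R) : R := r t / 3 * sqrt (1 - / (r t ^ 3)).
Definition BS_B (r : R -> R) (t : R) : R := r t / sqrt 3.

Definition BS_radial (r : R -> R) : Prop :=
  (forall t, 0 < t -> 1 < r t) /\
  (forall t, 0 < t ->
     is_derive (BS_A r) t (/2 * (1 - (BS_A r t)^2 / (BS_B r t)^2))) /\
  (forall t, 0 < t -> is_derive (BS_B r) t (BS_A r t / BS_B r t)) /\
  filterlim r (at_right 0) (locally 1).

Definition instanton_solution (r : R -> R) (t0 : R) (fp fm : R -> R) : Prop :=
  (forall t, t0 < t ->
     is_derive fp t (fp t / BS_A r t * (1 - (BS_A r t)^2 / (BS_B r t)^2 - fp t)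
                     + (fm t)^2 * (BS_A r t / (BS_B r t)^2)) /\
     is_derive fm t (2 * fm t / BS_A r t * (fp t - 1))) /\
  filterlim fp (at_right t0) (locally (fp t0)) /\
  filterlim fm (at_right t0) (locally (fm t0)).

(* Main.v *)
Require Import Defs.
From Stdlib Require Import Reals Lra Classical.
From Coquelicot Require Import Coquelicot.
Open Scope R_scope.

Lemma rc_ed (f : R -> R) (a : R) : filterlim f (at_right a) (locally (f a)) ->
  forall eps, 0 < eps -> exists d, 0 < d /\ forall x, a < x < a + d -> Rabs (f x - f a) < eps.
Proof.
intros H eps He. apply (proj1 (filterlim_locally f (f a))) with (eps := mkposreal eps He) in H.
destruct H as [d Hd]. exists d. split; [apply cond_pos|]. intros x Hx.
assert (Hb : ball a d x).
{ unfold ball; simpl; unfold AbsRing_ball, abs, minus, plus, opp; simpl. rewrite Rabs_pos_eq; lra. }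
specialize (Hd x Hb (proj1 Hx)). unfold ball in Hd; simpl in Hd; unfold AbsRing_ball, abs, minus, plus, opp in Hd; simpl in Hd. exact Hd.
Qed.

Lemma der_cont (f : R -> R) (x l : R) : is_derive f x l -> continuity_pt f x.
Proof. intro H. apply continuity_pt_filterlim. exact (ex_derive_continuous f x (ex_intro _ l H)). Qed.

Lemma der_ed (f : R -> R) (x l : R) : is_derive f x l ->
  forall eps, 0 < eps -> exists d, 0 < d /\ forall y, Rabs (y - x) < d -> Rabs (f y - f x) < eps.
Proof.
intros H eps He. apply der_cont in H. destruct (H eps He) as [d [Hd Hd']].
exists d. split; auto. intros y Hy. destruct (Req_dec y x) as [->|Hne].
- unfold Rminus; rewrite Rplus_opp_r, Rabs_R0; lra.
- apply (Hd' y). split. split; [exact I|auto]. simpl. unfold R_dist; exact Hy.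
Qed.

Lemma der_pos_left (f : R -> R) (x l : R) : is_derive f x l -> 0 < l ->
  exists d, 0 < d /\ forall h, 0 < h < d -> f (x - h) < f x.
Proof.
intros H Hl. apply is_derive_Reals in H. destruct (H (l/2) ltac:(lra)) as [d Hd].
exists d. split; [apply cond_pos|]. intros h Hh.
assert (Hn : - h <> 0) by lra. assert (Ha : Rabs (-h) < d) by (rewrite Rabs_Ropp, Rabs_pos_eq; lra).
specialize (Hd (-h) Hn Ha). replace (x + - h) with (x - h) in Hd by ring.
apply Rabs_def2 in Hd. destruct Hd as [H1 H2].
assert (Hq : 0 < (f (x - h) - f x) / - h) by lra.
assert (Hq2 : 0 < (f x - f (x - h)) / h).
{ replace ((f x - f (x - h)) / h) with ((f (x - h) - f x) / - h) by (field; lra). exact Hq. }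
unfold Rdiv in Hq2. apply Rmult_lt_reg_r with (/ h). apply Rinv_0_lt_compat; lra. nra.
Qed.

Lemma mono (f df : R -> R) (a b : R) : a <= b -> (forall x, a <= x <= b -> is_derive f x (df x)) ->
  (forall x, a <= x <= b -> 0 <= df x) -> f a <= f b.
Proof.
intros Hab Hd Hp. destruct (MVT_gen f a b df) as [c [Hc Heq]].
- intros x Hx. rewrite Rmin_left in Hx by lra. rewrite Rmax_right in Hx by lra. apply Hd; lra.
- intros x Hx. rewrite Rmin_left in Hx by lra. rewrite Rmax_right in Hx by lra. apply der_cont with (df x). apply Hd; lra.
- rewrite Rmin_left in Hc by lra. rewrite Rmax_right in Hc by lra.
  specialize (Hp c Hc). nra.
Qed.

Lemma barrier (u v du dv : R -> R) (t0 c1 c2 : R) :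
  c1 < u t0 -> c2 < v t0 ->
  filterlim u (at_right t0) (locally (u t0)) ->
  filterlim v (at_right t0) (locally (v t0)) ->
  (forall t, t0 < t -> is_derive u t (du t) /\ is_derive v t (dv t)) ->
  (forall t, t0 < t -> u t = c1 -> c2 <= v t -> 0 < du t) ->
  (forall t, t0 < t -> v t = c2 -> c1 <= u t -> 0 < dv t) ->
  forall t, t0 <= t -> c1 < u t /\ c2 < v t.
Proof.
intros Hu0 Hv0 Hru Hrv Hd Hdu Hdv t1 Ht1.
destruct (Req_dec t1 t0) as [->|Hne]; [auto|].
apply NNPP; intro Hbad.
set (E := fun s => t0 <= s <= t1 /\ forall x, t0 <= x <= s -> c1 < u x /\ c2 < v x).
assert (HbE : bound E). { exists t1. intros s Hs. apply Hs. }
assert (HE0 : exists x, E x). { exists t0. split. lra. intros x Hx. replace x with t0 by lra. auto. }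
destruct (completeness E HbE HE0) as [m [Hub Hlub]].
assert (Ha : forall x, t0 <= x < m -> c1 < u x /\ c2 < v x).
{ intros x Hx. apply NNPP; intro Hn.
  assert (m <= x). { apply Hlub. intros s [Hs1 Hs2]. destruct (Rle_dec s x); auto.
    exfalso. apply Hn. apply Hs2. lra. } lra. }
assert (Hm1 : m <= t1). { apply Hlub. intros s Hs; apply Hs. }
assert (Hmt0 : t0 < m).
{ destruct (rc_ed u t0 Hru (u t0 - c1) ltac:(lra)) as [d1 [Hd1 Hd1']].
  destruct (rc_ed v t0 Hrv (v t0 - c2) ltac:(lra)) as [d2 [Hd2 Hd2']].
  set (s := Rmin (t0 + Rmin d1 d2 / 2) t1).
  assert (Hs1 : t0 < s). { unfold s. apply Rmin_glb_lt; [|lra]. assert (0 < Rmin d1 d2) by (apply Rmin_glb_lt; lra). lra. }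
  assert (E s).
  { split. split. lra. apply Rmin_r. intros x Hx. destruct (Req_dec x t0) as [->|]; [auto|].
    assert (Hs2 : s <= t0 + Rmin d1 d2 / 2) by apply Rmin_l.
    assert (Rmin d1 d2 <= d1) by apply Rmin_l. assert (Rmin d1 d2 <= d2) by apply Rmin_r.
    assert (Hx1 := Hd1' x ltac:(lra)). assert (Hx2 := Hd2' x ltac:(lra)).
    apply Rabs_def2 in Hx1. apply Rabs_def2 in Hx2. lra. }
  specialize (Hub s H). lra. }
destruct (Hd m Hmt0) as [Hdum Hdvm].
assert (Hcu : c1 <= u m).
{ destruct (Rle_dec c1 (u m)) as [|Hn]; auto. exfalso.
  destruct (der_ed u m _ Hdum (c1 - u m) ltac:(lra)) as [d [Hd0 Hd']].
  set (x := m - Rmin d (m - t0) / 2).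
  assert (0 < Rmin d (m - t0)) by (apply Rmin_glb_lt; lra).
  assert (Rmin d (m - t0) <= d) by apply Rmin_l. assert (Rmin d (m - t0) <= m - t0) by apply Rmin_r.
  assert (Hx := Ha x ltac:(unfold x; lra)).
  assert (Hy := Hd' x ltac:(unfold x; rewrite Rabs_left; lra)). apply Rabs_def2 in Hy. lra. }
assert (Hcv : c2 <= v m).
{ destruct (Rle_dec c2 (v m)) as [|Hn]; auto. exfalso.
  destruct (der_ed v m _ Hdvm (c2 - v m) ltac:(lra)) as [d [Hd0 Hd']].
  set (x := m - Rmin d (m - t0) / 2).
  assert (0 < Rmin d (m - t0)) by (apply Rmin_glb_lt; lra).
  assert (Rmin d (m - t0) <= d) by apply Rmin_l. assert (Rmin d (m - t0) <= m - t0) by apply Rmin_r.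
  assert (Hx := Ha x ltac:(unfold x; lra)).
  assert (Hy := Hd' x ltac:(unfold x; rewrite Rabs_left; lra)). apply Rabs_def2 in Hy. lra. }
destruct (Req_dec (u m) c1) as [Heu|Hneu].
{ destruct (der_pos_left u m _ Hdum (Hdu m Hmt0 Heu Hcv)) as [d [Hd0 Hd']].
  set (h := Rmin d (m - t0) / 2).
  assert (0 < Rmin d (m - t0)) by (apply Rmin_glb_lt; lra).
  assert (Rmin d (m - t0) <= d) by apply Rmin_l. assert (Rmin d (m - t0) <= m - t0) by apply Rmin_r.
  assert (Hx := Ha (m - h) ltac:(unfold h; lra)). assert (Hy := Hd' h ltac:(unfold h; lra)). lra. }
destruct (Req_dec (v m) c2) as [Hev|Hnev].
{ destruct (der_pos_left v m _ Hdvm (Hdv m Hmt0 Hev Hcu)) as [d [Hd0 Hd']].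
  set (h := Rmin d (m - t0) / 2).
  assert (0 < Rmin d (m - t0)) by (apply Rmin_glb_lt; lra).
  assert (Rmin d (m - t0) <= d) by apply Rmin_l. assert (Rmin d (m - t0) <= m - t0) by apply Rmin_r.
  assert (Hx := Ha (m - h) ltac:(unfold h; lra)). assert (Hy := Hd' h ltac:(unfold h; lra)). lra. }
destruct (Req_dec m t1) as [Hmt|Hmt].
{ apply Hbad. subst m. lra. }
destruct (der_ed u m _ Hdum (u m - c1) ltac:(lra)) as [d1 [Hd1 Hd1']].
destruct (der_ed v m _ Hdvm (v m - c2) ltac:(lra)) as [d2 [Hd2 Hd2']].
set (s := Rmin (m + Rmin d1 d2 / 2) t1).
assert (0 < Rmin d1 d2) by (apply Rmin_glb_lt; lra).
assert (Rmin d1 d2 <= d1) by apply Rmin_l. assert (Rmin d1 d2 <= d2) by apply Rmin_r.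
assert (Hs1 : m < s). { unfold s. apply Rmin_glb_lt; lra. }
assert (Hs2 : s <= m + Rmin d1 d2 / 2) by apply Rmin_l.
assert (HEs : E s).
{ split. split. lra. apply Rmin_r. intros x Hx. destruct (Rlt_le_dec x m). apply Ha; lra.
  assert (Hx1 := Hd1' x ltac:(rewrite Rabs_pos_eq; lra)). assert (Hx2 := Hd2' x ltac:(rewrite Rabs_pos_eq; lra)).
  apply Rabs_def2 in Hx1. apply Rabs_def2 in Hx2. lra. }
specialize (Hub s HEs). lra.
Qed.

Lemma AB_facts (r : R -> R) t : 1 < r t ->
  0 < BS_A r t /\ 0 < BS_B r t /\ BS_A r t ^ 2 / BS_B r t ^ 2 = (1 - / r t ^ 3) / 3.
Proof.
intro H. assert (H3 : 1 < r t ^ 3). { simpl; nra. }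
assert (Hi : / r t ^ 3 < 1). { rewrite <- Rinv_1. apply Rinv_lt_contravar; lra. }
assert (Hs3 : 0 < sqrt 3) by (apply sqrt_lt_R0; lra).
assert (Hs : 0 < sqrt (1 - / r t ^ 3)) by (apply sqrt_lt_R0; lra).
unfold BS_A, BS_B. split; [|split].
- apply Rmult_lt_0_compat; [|exact Hs]. lra.
- apply Rdiv_lt_0_compat; lra.
- assert (E1 : sqrt (1 - / r t ^ 3) ^ 2 = 1 - / r t ^ 3) by (rewrite <- Rsqr_pow2; apply Rsqr_sqrt; lra).
  assert (E2 : sqrt 3 ^ 2 = 3) by (rewrite <- Rsqr_pow2; apply Rsqr_sqrt; lra).
  unfold Rdiv. rewrite !Rpow_mult_distr. rewrite E1, !pow_inv, E2.
  field. lra.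
Qed.
Theorem mainTheorem4 (r : R -> R) (t0 : R) (fp fm : R -> R) :
  BS_radial r -> 0 < t0 ->
  instanton_solution r t0 fp fm ->
  1 < fp t0 -> 1 < fm t0 ->
  ~ (exists M : R, forall t, t0 <= t -> Rabs (fp t) <= M /\ Rabs (fm t) <= M).
Proof.
intros [Hr1 [HdA [HdB _]]] Ht0 [Hode [Hrp Hrm]] Hu0 Hv0 [M HM].
set (A := BS_A r) in *. set (B := BS_B r) in *.
assert (HF : forall t, 0 < t -> 0 < A t /\ 0 < B t /\ A t ^ 2 / B t ^ 2 = (1 - / r t ^ 3) / 3)
  by (intros t Ht; apply AB_facts; auto).
assert (Hrm0 : forall t, t0 <= t -> r t0 <= r t).
{ intros t Ht. assert (HB : B t0 <= B t).
  { apply (mono B (fun s => A s / B s)); auto. intros x Hx; apply HdB; lra.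
    intros x Hx. destruct (HF x ltac:(lra)) as [Ha [Hb _]]. apply Rlt_le, Rdiv_lt_0_compat; auto. }
  unfold B, BS_B in HB. assert (Hs3 : 0 < sqrt 3) by (apply sqrt_lt_R0; lra).
  unfold Rdiv in HB. apply Rmult_le_reg_r with (/ sqrt 3); auto. apply Rinv_0_lt_compat; auto. }
set (eps := (1 - / r t0 ^ 3) / 3).
assert (Heps : 0 < eps).
{ assert (H3 : 1 < r t0 ^ 3) by (specialize (Hr1 t0 Ht0); simpl; nra).
  assert (/ r t0 ^ 3 < 1) by (rewrite <- Rinv_1; apply Rinv_lt_contravar; lra). unfold eps; lra. }
assert (Hq : forall t, t0 <= t -> eps <= A t ^ 2 / B t ^ 2).
{ intros t Ht. destruct (HF t ltac:(lra)) as [_ [_ ->]]. unfold eps.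
  assert (H1 := Hrm0 t Ht). assert (H2 := Hr1 t0 Ht0).
  assert (r t0 ^ 3 <= r t ^ 3) by (apply pow_incr; lra).
  assert (0 < r t0 ^ 3) by (apply pow_lt; lra).
  assert (/ r t ^ 3 <= / r t0 ^ 3) by (apply Rinv_le_contravar; lra). lra. }
set (L := fun s => A t0 + (s - t0) / 2).
assert (HL : forall t, t0 <= t -> A t <= L t).
{ intros t Ht. cut (0 <= L t - A t). lra.
  assert (E : L t0 - A t0 = 0) by (unfold L; lra). rewrite <- E.
  apply (mono (fun s => L s - A s) (fun s => 1/2 - / 2 * (1 - A s ^ 2 / B s ^ 2))); auto.
  - intros x Hx. assert (H1 : is_derive L x (1/2)) by (unfold L; auto_derive; [auto|lra]).
    pose proof (is_derive_minus _ _ _ _ _ H1 (HdA x ltac:(lra))) as H2.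
    exact H2.
  - intros x Hx. destruct (HF x ltac:(lra)) as [_ [_ ->]].
    assert (H3 : 1 < r x ^ 3) by (specialize (Hr1 x ltac:(lra)); simpl; nra).
    assert (/ r x ^ 3 < 1) by (rewrite <- Rinv_1; apply Rinv_lt_contravar; lra).
    set (w := / r x ^ 3) in *. lra. }
set (u0 := fp t0) in *. set (v0 := fm t0) in *.
set (c2 := (1 + v0) / 2).
assert (Hc2 : 1 < c2 < v0) by (unfold c2; lra).
assert (Hc22 : 0 < c2 * c2 - 1) by nra.
set (d := Rmin (Rmin ((u0 - 1) / 2) 1) (Rmin ((c2 * c2 - 1) / 2) (eps * (c2 * c2 - 1) / 8))).
assert (Hd1 : d <= (u0 - 1) / 2) by (unfold d; eapply Rle_trans; [apply Rmin_l|apply Rmin_l]).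
assert (Hd2 : d <= 1) by (unfold d; eapply Rle_trans; [apply Rmin_l|apply Rmin_r]).
assert (Hd3 : d <= (c2 * c2 - 1) / 2) by (unfold d; eapply Rle_trans; [apply Rmin_r|apply Rmin_l]).
assert (Hd4 : d <= eps * (c2 * c2 - 1) / 8) by (unfold d; eapply Rle_trans; [apply Rmin_r|apply Rmin_r]).
assert (Hd0 : 0 < d).
{ unfold d. assert (0 < eps * (c2 * c2 - 1)) by nra.
  apply Rmin_glb_lt; apply Rmin_glb_lt; unfold u0 in *; lra. }
set (c1 := 1 + d).
assert (Hbar := barrier fp fm _ _ t0 c1 c2 ltac:(unfold c1, u0 in *; lra) ltac:(unfold v0 in *; lra) Hrp Hrm Hode).
assert (Hgood : forall t, t0 <= t -> c1 < fp t /\ c2 < fm t).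
{ apply Hbar.
  - intros t Ht Heq Hv. destruct (HF t ltac:(lra)) as [Ha [Hb Hq']].
    assert (Hqt := Hq t ltac:(lra)). set (q := A t ^ 2 / B t ^ 2) in *.
    assert (E : A t / B t ^ 2 = q / A t) by (unfold q; field; lra).
    rewrite E, Heq.
    assert (Hn : 0 < c1 * (1 - q - c1) + fm t ^ 2 * q).
    { assert (fm t ^ 2 >= c2 * c2) by (simpl; nra).
      assert (q * (fm t ^ 2 - c1) >= eps * (c2 * c2 - c1)).
      { apply Rle_ge. apply Rmult_le_compat; unfold c1 in *; lra. }
      unfold c1 in *. nra. }
    replace (c1 / A t * (1 - q - c1) + fm t ^ 2 * (q / A t)) with ((c1 * (1 - q - c1) + fm t ^ 2 * q) / A t) by (field; lra).
    apply Rdiv_lt_0_compat; auto.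
  - intros t Ht Heq Hu. destruct (HF t ltac:(lra)) as [Ha _]. rewrite Heq.
    apply Rmult_lt_0_compat. apply Rdiv_lt_0_compat; lra. unfold c1 in *; lra. }
set (t1 := t0 + 1). set (K := 4 * c2 * d).
assert (HLpos : forall t, t0 <= t -> 0 < L t) by (intros t Ht; unfold L; destruct (HF t0 Ht0); lra).
assert (Hphi : forall t, t1 <= t -> fm t1 - K * ln (L t1) <= fm t - K * ln (L t)).
{ intros t Ht.
  apply (mono (fun s => fm s - K * ln (L s)) (fun s => 2 * fm s / A s * (fp s - 1) - K * (/2 / L s))); auto.
  - intros x Hx. assert (H1 : is_derive (fun s => K * ln (L s)) x (K * (/2 / L x))).
    { unfold L. auto_derive. assert (H := HLpos x ltac:(unfold t1 in *; lra)). unfold L in H. lra. field.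
      assert (H := HLpos x ltac:(unfold t1 in *; lra)). unfold L in H. lra. }
    exact (is_derive_minus _ _ _ _ _ (proj2 (Hode x ltac:(unfold t1 in *; lra))) H1).
  - intros x Hx. assert (Hx0 : t0 <= x) by (unfold t1 in *; lra).
    destruct (Hgood x Hx0) as [G1 G2]. destruct (HF x ltac:(lra)) as [Ha _].
    assert (HLx := HL x Hx0). assert (HLp := HLpos x Hx0).
    assert (2 * c2 * d / L x <= 2 * fm x / A x * (fp x - 1)).
    { replace (2 * fm x / A x * (fp x - 1)) with (2 * fm x * (fp x - 1) / A x) by (field; lra).
      apply Rle_trans with (2 * c2 * d / A x).
      - unfold Rdiv. apply Rmult_le_compat_l. nra. apply Rinv_le_contravar; lra.
      - unfold Rdiv. apply Rmult_le_compat_r. apply Rlt_le, Rinv_0_lt_compat; lra. unfold c1 in *; nra. }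
    replace (K * (/ 2 / L x)) with (2 * c2 * d / L x) by (unfold K; field; lra). lra. }
assert (Hv1 : fm t1 <= M) by (destruct (HM t1 ltac:(unfold t1; lra)) as [_ H]; apply Rabs_le_between in H; lra).
assert (HK : 0 < K) by (unfold K; nra).
assert (HLt1 : 0 < L t1) by (apply HLpos; unfold t1; lra).
set (T := (M - fm t1) / K + ln (L t1) + 1).
set (t := t0 + 2 * (exp T - A t0)).
assert (HLt : L t = exp T) by (unfold L, t; field).
assert (HTt : ln (L t1) < T) by (unfold T; assert (0 <= (M - fm t1) / K) by (apply Rdiv_le_0_compat; lra); lra).
assert (Hexp : L t1 < exp T) by (rewrite <- (exp_ln (L t1)) by auto; apply exp_increasing; auto).
assert (Htt1 : t1 <= t) by (rewrite <- HLt in Hexp; unfold L in Hexp; lra).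
specialize (Hphi t Htt1). rewrite HLt, ln_exp in Hphi.
assert (Hvt : fm t <= M) by (destruct (HM t ltac:(unfold t1 in *; lra)) as [_ H]; apply Rabs_le_between in H; lra).
assert (K * T = M - fm t1 + K * ln (L t1) + K) by (unfold T; field; lra).
lra.
Qed.
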